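(* Let $C,C'$ be finite-dimensional complexes of complex vector spaces whose differentials are matrices with entries in $\mathbb C[k_1,\dots,k_m]$, both having homology only along $Q=0$ for an irreducible $Q\in\mathbb C[k]$. Let $Q(q)=0$ and suppose there is a homotopy equivalence $C\leftrightarrow C'$ given by four matrices with entries in $\mathbb C(k)$ that are regular at $q$. Then $q$ is a regular homology point of $C$ if and only if it is a regular homology point of $C'$.
   Context: A homotopy equivalence: chain maps $R:C\to C'$, $L:C'\to C$ and $u\in\operatorname{End}^{-1}(C)$, $u'\in\operatorname{End}^{-1}(C')$ with $LR=1-du-ud$, $RL=1-d'u'-u'd'$ (here holding over $\mathbb C(k)$). For a complex $C$ with polynomial differential $d$, $\mathfrak h_k$ is the homology at $k$. A point $q$ is a regular homology point if $Q(q)=0$ and $q$ is a smooth point of $Q=0$; $\dim\mathfrak h_k=\dim\mathfrak h_q$ for all $k$ with $Q(k)=0$ in a Zariski neighborhood of $q$; and there is $\xi\in T_q\mathbb C^m$ with $\dot Q\ne0$ such that the differential induced on $\mathfrak h_q$ by $\dot d$ (derivative along $\xi$ at $q$) is exact. *)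

(* Defs.v *)
From HB Require Import structures.
From mathcomp Require Import all_boot all_order all_algebra.
From mathcomp Require Import fraction.
From mathcomp Require Import mpoly.
Set Implicit Arguments. Unset Strict Implicit. Unset Printing Implicit Defensive.
Import Order.TTheory GRing.Theory Num.Theory.
Local Open Scope ring_scope.

Notation Poly C m := {mpoly C[m]}.
Notation RatF C m := {fraction {mpoly C[m]}}.

Notation tofrac := (@FracField.tofrac _).
Notation "x %:F" := (@FracField.tofrac _ x) (format "x %:F") : ring_scope.

Section Defs.
Variables (C : numClosedFieldType) (m : nat).

Definition mconstant (p : Poly C m) : Prop := (msize p <= 1)%N.

(** irreducible element of C[k]: non-constant, and any factorization has a
    constant (= unit, as C is a field) factor. *)
Definition mirreducible (Q : Poly C m) : Prop :=
  ~ mconstant Q /\ forall A B : Poly C m, Q = A * B -> mconstant A \/ mconstant B.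

Definition evalmx (a b : nat) (d : 'M[Poly C m]_(a, b)) (k : 'I_m -> C)
  : 'M[C]_(a, b) := map_mx (fun p => p.@[k]) d.

Definition dermx (a b : nat) (d : 'M[Poly C m]_(a, b)) (q xi : 'I_m -> C)
  : 'M[C]_(a, b) := map_mx (fun p => \sum_(i < m) xi i * (p^`M(i)).@[q]) d.

(** dimension of the homology of (C^n, d(k)) (d(k)^2 = 0):
    dim ker d(k) - dim im d(k) *)
Definition hdim (n : nat) (d : 'M[Poly C m]_n) (k : 'I_m -> C) : nat :=
  ((n - \rank (evalmx d k)) - \rank (evalmx d k))%N.

(** A (graded) complex: C^n with grading deg : 'I_n -> G, G an abelian group,
    and a polynomial differential d (column-vector convention, d i j is the
    coefficient from basis vector j to basis vector i) of degree +one, with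
    d^2 = 0. *)
Definition is_complex (G : zmodType) (one : G) (n : nat) (deg : 'I_n -> G)
  (d : 'M[Poly C m]_n) : Prop :=
  d *m d = 0 /\ forall i j, d i j != 0 -> deg i = deg j + one.

Definition homology_along (n : nat) (d : 'M[Poly C m]_n) (Q : Poly C m) : Prop :=
  forall k : 'I_m -> C, Q.@[k] != 0 -> hdim d k = 0%N.

Definition regular_at (f : RatF C m) (q : 'I_m -> C) : Prop :=
  exists (p D : Poly C m), D.@[q] != 0 /\ f = p%:F / D%:F.

Definition regular_mx_at (a b : nat) (A : 'M[RatF C m]_(a, b)) (q : 'I_m -> C)
  : Prop := forall i j, regular_at (A i j) q.

Definition fracmx (a b : nat) (d : 'M[Poly C m]_(a, b)) : 'M[RatF C m]_(a, b) :=
  map_mx (fun p => p%:F) d.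

(** homotopy equivalence between (C^n, deg, d) and (C^n', deg', d') over C(k):
    chain maps R : C -> C', L : C' -> C (degree 0), homotopies u, u' of
    degree -one, with LR = 1 - du - ud and RL = 1 - d'u' - u'd'. *)
Definition homotopy_equivalence (G : zmodType) (one : G)
  (n n' : nat) (deg : 'I_n -> G) (deg' : 'I_n' -> G)
  (d : 'M[Poly C m]_n) (d' : 'M[Poly C m]_n')
  (R : 'M[RatF C m]_(n', n)) (L : 'M[RatF C m]_(n, n'))
  (u : 'M[RatF C m]_n) (u' : 'M[RatF C m]_n') : Prop :=
  (fracmx d' *m R = R *m fracmx d) /\
  (fracmx d *m L = L *m fracmx d') /\
  (forall i j, R i j != 0 -> deg' i = deg j) /\
  (forall i j, L i j != 0 -> deg i = deg' j) /\
  (forall i j, u i j != 0 -> deg i + one = deg j) /\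
  (forall i j, u' i j != 0 -> deg' i + one = deg' j) /\
  (L *m R = 1%:M - fracmx d *m u - u *m fracmx d) /\
  (R *m L = 1%:M - fracmx d' *m u' - u' *m fracmx d').

Definition regular_homology_point (n : nat) (d : 'M[Poly C m]_n)
  (Q : Poly C m) (q : 'I_m -> C) : Prop :=
  [/\ Q.@[q] = 0,
      (* smooth point of Q = 0: the gradient of Q at q is nonzero *)
      (exists i : 'I_m, (Q^`M(i)).@[q] != 0),
      (* constant homology dimension on Q = 0 in a Zariski neighbourhood
         D(g) = {g <> 0} of q *)
      (exists g : Poly C m, g.@[q] != 0 /\
         forall k : 'I_m -> C, Q.@[k] = 0 -> g.@[k] != 0 -> hdim d k = hdim d q) &
      (* some xi with dQ(xi) <> 0 such that the map induced by dot d on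
         the homology H(d(q)) = ker d(q) / im d(q) is exact *)
      (exists xi : 'I_m -> C,
         \sum_(i < m) xi i * (Q^`M(i)).@[q] != 0 /\
         forall v : 'cV[C]_n,
           evalmx d q *m v = 0 ->
           (exists z, dermx d q xi *m v = evalmx d q *m z) ->
           exists w : 'cV[C]_n, evalmx d q *m w = 0 /\
             exists z, v - dermx d q xi *m w = evalmx d q *m z)].

End Defs.

(* Main.v *)
Require Import Defs.
From HB Require Import structures.
From mathcomp Require Import all_boot all_order all_algebra.
From mathcomp Require Import fraction.
From mathcomp Require Import mpoly.
From mathcomp Require Import zify.
Set Implicit Arguments. Unset Strict Implicit. Unset Printing Implicit Defensive.
Import Order.TTheory GRing.Theory Num.Theory.
Local Open Scope ring_scope.
Lemma hom_le (F : fieldType) n n' (e : 'M[F]_n) (e' : 'M[F]_n')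
  (P : 'M[F]_(n,n')) (Q0 : 'M[F]_(n',n)) (w : 'M[F]_n) :
  e *m e = 0 -> e' *m e' = 0 -> P *m e' = e *m P -> Q0 *m e = e' *m Q0 ->
  P *m Q0 = 1%:M - w *m e - e *m w ->
  (n - \rank e - \rank e <= n' - \rank e' - \rank e')%N.
Proof.
move=> ee e'e' Pe Qe PQ.
set K := kermx e.
have eK : (e <= K)%MS by apply/sub_kermxP.
set S := (K :\: e)%MS.
have SK : (S <= K)%MS := diffmxSl K e.
have Se0 : S *m e = 0 by apply/sub_kermxP.
have Scap : (S :&: e)%MS = 0 := capmx_diff K e.
have rS : \rank S = (n - \rank e - \rank e)%N.
  have := mxrank_cap_compl K e.
  rewrite (capmx_idPr eK) mxrank_ker -/S; lia.
set Y := S *m P.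
have Ye' : Y *m e' = 0 by rewrite /Y -mulmxA Pe mulmxA Se0 mul0mx.
have Ycap : (Y :&: e')%MS = 0.
  apply/eqP; rewrite -submx0.
  have /submxP [A XA] : ((Y :&: e') <= Y)%MS := capmxSl _ _.
  have /submxP [B XB] : ((Y :&: e') <= e')%MS := capmxSr _ _.
  set Z := A *m S.
  have ZS : (Z <= S)%MS := submxMl _ _.
  have Ze : Z *m e = 0 by rewrite /Z -mulmxA Se0 mulmx0.
  have E1 : (Y :&: e')%MS *m Q0 = Z - Z *m w *m e.
    by rewrite XA /Y !mulmxA -/Z -mulmxA PQ !mulmxBr mulmx1 !mulmxA Ze mul0mx subr0.
  have E2 : (Y :&: e')%MS *m Q0 = (B *m Q0) *m e.
    by rewrite XB -mulmxA -Qe mulmxA.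
  have Zsub : (Z <= e)%MS.
    have -> : Z = (B *m Q0 + Z *m w) *m e.
      by rewrite mulmxDl -E2 E1 subrK.
    exact: submxMl.
  have : (Z <= S :&: e)%MS by rewrite sub_capmx ZS Zsub.
  rewrite Scap submx0 => /eqP Z0.
  by rewrite XA /Y mulmxA -/Z Z0 mul0mx sub0mx.
have rY : (\rank Y + \rank e' <= n' - \rank e')%N.
  have := mxrank_sum_cap Y e'; rewrite Ycap mxrank0 addn0 => <-.
  rewrite -mxrank_ker; apply: mxrankS.
  by rewrite addsmx_sub; apply/andP; split; apply/sub_kermxP.
have rSY : (\rank S <= \rank Y)%N.
  have SE : S = Y *m Q0 + (S *m w) *m e.
    by rewrite /Y -mulmxA PQ !mulmxBr mulmx1 !mulmxA Se0 mul0mx subr0 subrK.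
  have h1 : (\rank (S + e)%MS = \rank S + \rank e)%N.
    by have := mxrank_sum_cap S e; rewrite Scap mxrank0 addn0.
  have h2 : (\rank (S + e)%MS <= \rank (Y *m Q0 + e)%MS)%N.
    apply: mxrankS; rewrite addsmx_sub addsmxSr andbT {1}SE.
    by apply: addmx_sub_adds => //; apply: submxMl.
  have h3 := (mxrank_adds_leqif (Y *m Q0) e).1.
  have h4 := mxrankM_maxl Y Q0.
  lia.
lia.
Qed.
Definition exactP (F : fieldType) n (d0 d1 : 'M[F]_n) :=
  forall v : 'cV[F]_n, d0 *m v = 0 -> (exists z, d1 *m v = d0 *m z) ->
  exists w : 'cV[F]_n, d0 *m w = 0 /\ exists z, v - d1 *m w = d0 *m z.

Lemma exact_transfer (F : fieldType) n n' (d0 d1 : 'M[F]_n) (e0 e1 : 'M[F]_n')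
  (R0 R1 : 'M[F]_(n',n)) (L0 L1 : 'M[F]_(n,n')) (u' : 'M[F]_n') :
  e0 *m R0 = R0 *m d0 -> e1 *m R0 + e0 *m R1 = R1 *m d0 + R0 *m d1 ->
  d0 *m L0 = L0 *m e0 -> d1 *m L0 + d0 *m L1 = L1 *m e0 + L0 *m e1 ->
  R0 *m L0 = 1%:M - e0 *m u' - u' *m e0 ->
  exactP d0 d1 -> exactP e0 e1.
Proof.
move=> hR0 hR1 hL0 hL1 hRL ex v' e0v [z' hz'].
have dv : d0 *m (L0 *m v') = 0 by rewrite mulmxA hL0 -mulmxA e0v mulmx0.
have d1v : d1 *m (L0 *m v') = d0 *m (L0 *m z' - L1 *m v').
  have := congr1 (mulmx^~ v') hL1.
  rewrite !mulmxDl -!mulmxA e0v mulmx0 add0r hz' mulmxBr !mulmxA hL0 => <-.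
  by rewrite addrK.
have [w [dw [z hz]]] := ex _ dv (ex_intro _ _ d1v).
exists (R0 *m w); split; first by rewrite mulmxA hR0 -mulmxA dw mulmx0.
exists (u' *m v' + R0 *m z + R1 *m w).
have h1 : e1 *m (R0 *m w) = R0 *m (d1 *m w) - e0 *m (R1 *m w).
  have := congr1 (mulmx^~ w) hR1.
  rewrite !mulmxDl -!mulmxA dw mulmx0 add0r => <-.
  by rewrite addrK.
have h2 : d1 *m w = L0 *m v' - d0 *m z by rewrite -hz opprB addrC subrK.
have h3 : R0 *m (L0 *m v') = v' - e0 *m (u' *m v').
  by rewrite mulmxA hRL !mulmxBl mul1mx -!mulmxA e0v mulmx0 subr0.
rewrite h1 h2 mulmxBr h3 !mulmxA -hR0 -!mulmxA !mulmxDr.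
by rewrite !opprD !opprK !addrA subrr add0r.
Qed.

Lemma hom_le_col (F : fieldType) n n' (d : 'M[F]_n) (d' : 'M[F]_n')
  (R0 : 'M[F]_(n',n)) (L0 : 'M[F]_(n,n')) (w : 'M[F]_n) :
  d *m d = 0 -> d' *m d' = 0 -> d' *m R0 = R0 *m d -> d *m L0 = L0 *m d' ->
  L0 *m R0 = 1%:M - d *m w - w *m d ->
  (n - \rank d - \rank d <= n' - \rank d' - \rank d')%N.
Proof.
move=> dd d'd' hR hL hLR.
rewrite -(mxrank_tr d) -(mxrank_tr d').
apply: (@hom_le F n n' d^T d'^T R0^T L0^T w^T).
- by rewrite -trmx_mul dd trmx0.
- by rewrite -trmx_mul d'd' trmx0.
- by rewrite -!trmx_mul hR.
- by rewrite -!trmx_mul hL.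
- by rewrite -!trmx_mul hLR !linearB /= trmx1 !trmx_mul.
Qed.

Lemma scale_rel (F : fieldType) n (d : 'M[F]_n) (X : 'M[F]_n) (ut : 'M[F]_n) c :
  c != 0 -> X = (c * c)%:M - c *: (d *m ut + ut *m d) ->
  c^-1 *: (c^-1 *: X) = 1%:M - d *m (c^-1 *: ut) - (c^-1 *: ut) *m d.
Proof.
move=> c0 ->.
rewrite -scalemxAl -scalemxAr scalerA scalerBr -scalemx1 scalerA scalerA.
have -> : c^-1 * c^-1 * (c * c) = 1 by rewrite mulrACA mulVf // mulr1.
have -> : c^-1 * c^-1 * c = c^-1 by rewrite mulfVK.
by rewrite scale1r scalerDr opprD addrA.
Qed.

Lemma hdim_scaled (F : fieldType) n n' (d : 'M[F]_n) (d' : 'M[F]_n')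
  (Rt : 'M[F]_(n',n)) (Lt : 'M[F]_(n,n')) (ut : 'M[F]_n) (ut' : 'M[F]_n') c :
  c != 0 -> d *m d = 0 -> d' *m d' = 0 -> d' *m Rt = Rt *m d -> d *m Lt = Lt *m d' ->
  Lt *m Rt = (c * c)%:M - c *: (d *m ut + ut *m d) ->
  Rt *m Lt = (c * c)%:M - c *: (d' *m ut' + ut' *m d') ->
  (n - \rank d - \rank d = n' - \rank d' - \rank d')%N.
Proof.
move=> c0 dd d'd' hR hL hLR hRL.
apply/eqP; rewrite eqn_leq; apply/andP; split.
- apply: (@hom_le_col F n n' d d' (c^-1 *: Rt) (c^-1 *: Lt) (c^-1 *: ut)) => //.
  + by rewrite -scalemxAr hR scalemxAl.
  + by rewrite -scalemxAr hL scalemxAl.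
  + by rewrite -scalemxAl -scalemxAr; exact: scale_rel.
- apply: (@hom_le_col F n' n d' d (c^-1 *: Lt) (c^-1 *: Rt) (c^-1 *: ut')) => //.
  + by rewrite -scalemxAr hL scalemxAl.
  + by rewrite -scalemxAr hR scalemxAl.
  + by rewrite -scalemxAl -scalemxAr; exact: scale_rel.
Qed.

Lemma exact_scaled (F : fieldType) n n' (d0 d1 : 'M[F]_n) (e0 e1 : 'M[F]_n')
  (R0 R1 : 'M[F]_(n',n)) (L0 L1 : 'M[F]_(n,n')) (u' : 'M[F]_n') c :
  c != 0 ->
  e0 *m R0 = R0 *m d0 -> e1 *m R0 + e0 *m R1 = R1 *m d0 + R0 *m d1 ->
  d0 *m L0 = L0 *m e0 -> d1 *m L0 + d0 *m L1 = L1 *m e0 + L0 *m e1 ->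
  R0 *m L0 = (c * c)%:M - c *: (e0 *m u' + u' *m e0) ->
  exactP d0 d1 -> exactP e0 e1.
Proof.
move=> c0 hR0 hR1 hL0 hL1 hRL.
apply: (@exact_transfer F n n' d0 d1 e0 e1 (c^-1 *: R0) (c^-1 *: R1)
   (c^-1 *: L0) (c^-1 *: L1) (c^-1 *: u')).
- by rewrite -scalemxAr hR0 scalemxAl.
- by rewrite -!scalemxAr -!scalemxAl -!scalerDr hR1.
- by rewrite -scalemxAr hL0 scalemxAl.
- by rewrite -!scalemxAr -!scalemxAl -!scalerDr hL1.
- by rewrite -scalemxAl -scalemxAr; exact: scale_rel.
Qed.

Section S.
Variables (C : numClosedFieldType) (m : nat).

Lemma evalmxM a b c (A : 'M[{mpoly C[m]}]_(a,b)) (B : 'M[{mpoly C[m]}]_(b,c)) k :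
  evalmx (A *m B) k = evalmx A k *m evalmx B k.
Proof. exact: (map_mxM (meval k)). Qed.

Lemma evalmxD a b (A B : 'M[{mpoly C[m]}]_(a,b)) k :
  evalmx (A + B) k = evalmx A k + evalmx B k.
Proof. by apply/matrixP=> i j; rewrite !mxE mevalD. Qed.

Lemma evalmxB a b (A B : 'M[{mpoly C[m]}]_(a,b)) k :
  evalmx (A - B) k = evalmx A k - evalmx B k.
Proof. by apply/matrixP=> i j; rewrite !mxE mevalB. Qed.

Lemma evalmx0 a b k : evalmx (0 : 'M[{mpoly C[m]}]_(a,b)) k = 0.
Proof. by apply/matrixP=> i j; rewrite !mxE meval0. Qed.

Lemma evalmxZ a b (A : 'M[{mpoly C[m]}]_(a,b)) D k :
  evalmx (D *: A) k = D.@[k] *: evalmx A k.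
Proof. by apply/matrixP=> i j; rewrite !mxE mevalM. Qed.

Lemma evalmxC a (D : {mpoly C[m]}) k :
  evalmx (D%:M : 'M_a) k = (D.@[k])%:M.
Proof. by apply/matrixP=> i j; rewrite !mxE; case: (i == j); rewrite ?meval0 ?mulr1n ?mulr0n. Qed.

Definition derq (q xi : 'I_m -> C) (p : {mpoly C[m]}) : C :=
  \sum_(i < m) xi i * (p^`M(i)).@[q].

Lemma derqD q xi p r : derq q xi (p + r) = derq q xi p + derq q xi r.
Proof. by rewrite /derq -big_split; apply: eq_bigr => i _; rewrite mderivD mevalD mulrDr. Qed.

Lemma derq0 q xi : derq q xi 0 = 0.
Proof. by rewrite /derq big1 // => i _; rewrite mderiv0 meval0 mulr0. Qed.

Lemma derqM q xi p r :
  derq q xi (p * r) = derq q xi p * r.@[q] + p.@[q] * derq q xi r.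
Proof.
rewrite /derq mulr_suml mulr_sumr -big_split; apply: eq_bigr => i _.
by rewrite mderivM mevalD !mevalM mulrDr mulrA; congr (_ + _); rewrite mulrCA.
Qed.

Lemma derq_sum q xi I (r : seq I) (P : pred I) (F : I -> {mpoly C[m]}) :
  derq q xi (\sum_(i <- r | P i) F i) = \sum_(i <- r | P i) derq q xi (F i).
Proof. exact: (big_morph _ (derqD q xi) (derq0 q xi)). Qed.

Lemma dermxM a b c (A : 'M[{mpoly C[m]}]_(a,b)) (B : 'M[{mpoly C[m]}]_(b,c)) q xi :
  dermx (A *m B) q xi = dermx A q xi *m evalmx B q + evalmx A q *m dermx B q xi.
Proof.
apply/matrixP=> i j; rewrite !mxE.
change (derq q xi (\sum_k A i k * B k j) =
  \sum_k dermx A q xi i k * evalmx B q k j + (\sum_k evalmx A q i k * dermx B q xi k j)).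
rewrite derq_sum -big_split; apply: eq_bigr => l _; rewrite derqM !mxE //.
Qed.

Lemma dermxD a b (A B : 'M[{mpoly C[m]}]_(a,b)) q xi :
  dermx (A + B) q xi = dermx A q xi + dermx B q xi.
Proof. by apply/matrixP=> i j; rewrite !mxE; exact: derqD. Qed.

End S.

Section S.
Variables (C : numClosedFieldType) (m : nat).
Implicit Types (q : 'I_m -> C).

Lemma fracmxM a b c (A : 'M[{mpoly C[m]}]_(a,b)) (B : 'M[{mpoly C[m]}]_(b,c)) :
  fracmx (A *m B) = fracmx A *m fracmx B.
Proof.
apply/matrixP=> i j; rewrite !mxE rmorph_sum; apply: eq_bigr => l _.
by rewrite !mxE rmorphM.
Qed.

Lemma fracmx_inj a b : injective (@fracmx C m a b).
Proof.
move=> A B /matrixP h; apply/matrixP=> i j; have := h i j; rewrite !mxE.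
by move/eqP; rewrite tofrac_eq => /eqP.
Qed.

Lemma fracmxD a b (A B : 'M[{mpoly C[m]}]_(a,b)) : fracmx (A + B) = fracmx A + fracmx B.
Proof. by apply/matrixP=> i j; rewrite !mxE tofracD. Qed.
Lemma fracmxB a b (A B : 'M[{mpoly C[m]}]_(a,b)) : fracmx (A - B) = fracmx A - fracmx B.
Proof. by apply/matrixP=> i j; rewrite !mxE tofracB. Qed.
Lemma fracmxZ a b (A : 'M[{mpoly C[m]}]_(a,b)) D : fracmx (D *: A) = D%:F *: fracmx A.
Proof. by apply/matrixP=> i j; rewrite !mxE tofracM. Qed.
Lemma fracmxC a (D : {mpoly C[m]}) : fracmx (D%:M : 'M_a) = (D%:F)%:M.
Proof.
by apply/matrixP=> i j; rewrite !mxE; case: (i == j); rewrite ?tofrac0 ?mulr1n ?mulr0n.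
Qed.

Definition good (D : {mpoly C[m]}) a b (A : 'M[{fraction {mpoly C[m]}}]_(a,b)) :=
  forall i j, exists p, D%:F * A i j = p%:F.

Lemma common_denom q (s : seq {fraction {mpoly C[m]}}) :
  (forall f, f \in s -> regular_at f q) ->
  exists D : {mpoly C[m]}, D.@[q] != 0 /\ forall f, f \in s -> exists p, D%:F * f = p%:F.
Proof.
elim: s => [|f s IH] H.
  by exists 1; split => //; rewrite meval1 oner_neq0.
have [p [E [Eq fE]]] := H f (mem_head _ _).
have [D [Dq HD]] : exists D : {mpoly C[m]}, D.@[q] != 0 /\
    forall f, f \in s -> exists p, D%:F * f = p%:F.
  by apply: IH => g gs; apply: H; rewrite inE gs orbT.
have E0 : E%:F != 0.
  by rewrite tofrac_eq0; apply: contraNneq Eq => ->; rewrite meval0.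
exists (D * E); split; first by rewrite mevalM mulf_neq0.
move=> g; rewrite inE => /predU1P [->| gs].
  by exists (D * p); rewrite fE !tofracM -mulrA; congr (_ * _); rewrite mulrC mulfVK.
have [r hr] := HD g gs; exists (E * r).
by rewrite !tofracM -hr mulrAC mulrC.
Qed.

Lemma good_reg a b q (A : 'M[{fraction {mpoly C[m]}}]_(a,b)) :
  regular_mx_at A q -> exists D, D.@[q] != 0 /\ good D A.
Proof.
move=> hA.
have [D [Dq HD]] := @common_denom q [seq A x.1 x.2 | x <- enum {: 'I_a * 'I_b}] 
  (fun f hf => match mapP hf with ex_intro2 x _ e => eq_ind_r (fun g => regular_at g q) (hA x.1 x.2) e end).
exists D; split => // i j; apply: HD; apply/mapP; exists (i, j) => //.
by rewrite mem_enum.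
Qed.

Lemma goodM D E a b (A : 'M[{fraction {mpoly C[m]}}]_(a,b)) :
  good D A -> good (D * E) A.
Proof.
move=> h i j; have [p hp] := h i j; exists (E * p).
by rewrite !tofracM -hp mulrAC mulrC.
Qed.

Lemma good_mx D a b (A : 'M[{fraction {mpoly C[m]}}]_(a,b)) :
  good D A -> exists At, fracmx At = D%:F *: A.
Proof.
move=> h.
have [f hf] := @fin_all_exists _ (fun _ => {mpoly C[m]})
  (fun x p => D%:F * A x.1 x.2 = p%:F) (fun x => h x.1 x.2).
exists (\matrix_(i, j) f (i, j)); apply/matrixP => i j.
by rewrite !mxE (hf (i, j)).
Qed.

End S.

Lemma homot_scale (K : comRingType) n n' (d : 'M[K]_n) (L : 'M[K]_(n,n'))
  (R : 'M[K]_(n',n)) (u : 'M[K]_n) a :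
  L *m R = 1%:M - d *m u - u *m d ->
  (a *: L) *m (a *: R) = (a * a)%:M - a *: (d *m (a *: u) + (a *: u) *m d).
Proof.
move=> h.
have -> : d *m (a *: u) = a *: (d *m u) by rewrite scalemxAr.
have -> : (a *: u) *m d = a *: (u *m d) by rewrite scalemxAl.
have -> : (a *: L) *m (a *: R) = (a * a) *: (L *m R) by rewrite -scalemxAl -scalemxAr scalerA.
by rewrite h -scalerDr scalerA !scalerBr scalemx1 scalerDr opprD addrA.
Qed.

Lemma goodMl (C : numClosedFieldType) (m : nat) D E a b (A : 'M[{fraction {mpoly C[m]}}]_(a,b)) :
  good D A -> good (E * D) A.
Proof.
move=> h i j; have [p hp] := h i j; exists (E * p).
by rewrite !tofracM -hp mulrA.
Qed.

Lemma one_dir (C : numClosedFieldType) (m : nat) (G : zmodType) (one : G)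
  (n n' : nat) (deg : 'I_n -> G) (deg' : 'I_n' -> G)
  (d : 'M[{mpoly C[m]}]_n) (d' : 'M[{mpoly C[m]}]_n')
  (Q : {mpoly C[m]}) (q : 'I_m -> C)
  (R : 'M[{fraction {mpoly C[m]}}]_(n', n)) (L : 'M[{fraction {mpoly C[m]}}]_(n, n'))
  (u : 'M[{fraction {mpoly C[m]}}]_n) (u' : 'M[{fraction {mpoly C[m]}}]_n') :
  d *m d = 0 -> d' *m d' = 0 ->
  homotopy_equivalence one deg deg' d d' R L u u' ->
  regular_mx_at R q -> regular_mx_at L q ->
  regular_mx_at u q -> regular_mx_at u' q ->
  regular_homology_point d Q q -> regular_homology_point d' Q q.
Proof.
move=> dd d'd' [hdR [hdL [_ [_ [_ [_ [hLR hRL]]]]]]] rR rL ru ru'.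
have [D1 [D1q g1]] := good_reg rR.
have [D2 [D2q g2]] := good_reg rL.
have [D3 [D3q g3]] := good_reg ru.
have [D4 [D4q g4]] := good_reg ru'.
pose D := D1 * D2 * D3 * D4.
have Dq : D.@[q] != 0 by rewrite /D !mevalM !mulf_neq0.
have [Rt hRt] := good_mx (goodM D4 (goodM D3 (goodM D2 g1)) : good D R).
have [Lt hLt] := good_mx (goodM D4 (goodM D3 (goodMl D1 g2)) : good D L).
have [ut hut] := good_mx (goodM D4 (goodMl (D1 * D2) g3) : good D u).
have [ut' hut'] := good_mx (goodMl (D1 * D2 * D3) g4 : good D u').
have I1 : d' *m Rt = Rt *m d.
  by apply: fracmx_inj; rewrite !fracmxM hRt -scalemxAr hdR scalemxAl.
have I2 : d *m Lt = Lt *m d'.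
  by apply: fracmx_inj; rewrite !fracmxM hLt -scalemxAr hdL scalemxAl.
have I3 : Lt *m Rt = (D * D)%:M - D *: (d *m ut + ut *m d).
  apply: fracmx_inj; rewrite fracmxB fracmxC fracmxZ fracmxD !fracmxM hLt hRt hut.
  by rewrite (tofracM D D); apply: homot_scale.
have I4 : Rt *m Lt = (D * D)%:M - D *: (d' *m ut' + ut' *m d').
  apply: fracmx_inj; rewrite fracmxB fracmxC fracmxZ fracmxD !fracmxM hLt hRt hut'.
  by rewrite (tofracM D D); apply: homot_scale.
have ev0 : forall k, evalmx d k *m evalmx d k = 0.
  by move=> k; rewrite -evalmxM dd evalmx0.
have ev0' : forall k, evalmx d' k *m evalmx d' k = 0.
  by move=> k; rewrite -evalmxM d'd' evalmx0.
have E1 : forall k, evalmx d' k *m evalmx Rt k = evalmx Rt k *m evalmx d k.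
  by move=> k; rewrite -!evalmxM I1.
have E2 : forall k, evalmx d k *m evalmx Lt k = evalmx Lt k *m evalmx d' k.
  by move=> k; rewrite -!evalmxM I2.
have E3 : forall k, evalmx Lt k *m evalmx Rt k = (D.@[k] * D.@[k])%:M
    - D.@[k] *: (evalmx d k *m evalmx ut k + evalmx ut k *m evalmx d k).
  by move=> k; rewrite -!evalmxM I3 evalmxB evalmxC evalmxZ evalmxD !evalmxM mevalM.
have E4 : forall k, evalmx Rt k *m evalmx Lt k = (D.@[k] * D.@[k])%:M
    - D.@[k] *: (evalmx d' k *m evalmx ut' k + evalmx ut' k *m evalmx d' k).
  by move=> k; rewrite -!evalmxM I4 evalmxB evalmxC evalmxZ evalmxD !evalmxM mevalM.
have hdimE : forall k, D.@[k] != 0 -> hdim d k = hdim d' k.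
  move=> k Dk; rewrite /hdim.
  exact: (hdim_scaled Dk (ev0 k) (ev0' k) (E1 k) (E2 k) (E3 k) (E4 k)).
case=> Qq smooth [g [gq hg]] [xi [xiQ ex]]; split => //.
  exists (g * D); split; first by rewrite mevalM mulf_neq0.
  move=> k Qk; rewrite mevalM mulf_eq0 negb_or => /andP [gk Dk].
  by rewrite -hdimE // hg // hdimE.
exists xi; split => //.
have D1' : dermx d' q xi *m evalmx Rt q + evalmx d' q *m dermx Rt q xi =
    dermx Rt q xi *m evalmx d q + evalmx Rt q *m dermx d q xi.
  by rewrite -!dermxM I1.
have D2' : dermx d q xi *m evalmx Lt q + evalmx d q *m dermx Lt q xi =
    dermx Lt q xi *m evalmx d' q + evalmx Lt q *m dermx d' q xi.
  by rewrite -!dermxM I2.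
exact: (exact_scaled Dq (E1 q) D1' (E2 q) D2' (E4 q) ex).
Qed.

Theorem mainTheorem6 (C : numClosedFieldType) (m : nat) (G : zmodType) (one : G)
  (n n' : nat) (deg : 'I_n -> G) (deg' : 'I_n' -> G)
  (d : 'M[{mpoly C[m]}]_n) (d' : 'M[{mpoly C[m]}]_n')
  (Q : {mpoly C[m]}) (q : 'I_m -> C)
  (R : 'M[{fraction {mpoly C[m]}}]_(n', n)) (L : 'M[{fraction {mpoly C[m]}}]_(n, n'))
  (u : 'M[{fraction {mpoly C[m]}}]_n) (u' : 'M[{fraction {mpoly C[m]}}]_n') :
  is_complex one deg d -> is_complex one deg' d' ->
  mirreducible Q ->
  homology_along d Q -> homology_along d' Q ->
  Q.@[q] = 0 ->
  homotopy_equivalence one deg deg' d d' R L u u' ->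
  regular_mx_at R q -> regular_mx_at L q ->
  regular_mx_at u q -> regular_mx_at u' q ->
  (regular_homology_point d Q q <-> regular_homology_point d' Q q).
Proof.
move=> [dd _] [d'd' _] _ _ _ _ hom rR rL ru ru'; split.
  exact: (one_dir dd d'd' hom rR rL ru ru').
have hom' : homotopy_equivalence one deg' deg d' d L R u' u.
  by case: hom => [a [b [c [e [f [g [h i]]]]]]].
exact: (one_dir d'd' dd hom' rL rR ru' ru).
Qed.
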